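(* Let $\mathcal O$ be the suboperad of $\mathrm{CNCB}$ generated by $p:=T_{bbu}$ and $r:=T_{ubu}$. Then $\mathcal O$ admits the presentation with generators $p,r$ of arity $2$ and relations $$r\circ_1 r=r\circ_2 r,\qquad r\circ_1 p=p\circ_2 r.$$ That is, $\mathcal O$ is isomorphic, via the morphism sending the generators to $p$ and $r$, to the quotient of the free operad on two binary generators by the operadic congruence generated by these relations.
   Context: For $n\ge2$, a bicoloured noncrossing configuration (BNC) of size $n$ is a regular polygon with vertices $1,\dots,n+1$ clockwise, together with disjoint sets of blue and red arcs among the arcs $(i,j)$, $1\le i<j\le n+1$. The arcs $(i,i+1)$ are the edges ($i$th edge), $(1,n+1)$ is the base, and the others are diagonals. Coloured arcs are pairwise noncrossing ($(i,j),(k,l)$ cross iff $i<k<j<l$ or $k<i<l<j$), and red arcs are diagonals. There is one BNC of size $1$, a blue segment, which is the unit. The operad $\mathrm{CNCB}$ has the BNCs as elements (arity = size). Its composition $\mathfrak C\circ_i\mathfrak D$ ($\mathfrak C$ of size $n$, $\mathfrak D$ of size $m$) glues the base of $\mathfrak D$ on the $i$th edge of $\mathfrak C$. Arcs $(a,b)$ of $\mathfrak C$ become $(\sigma(a),\sigma(b))$ with $\sigma(v)=v$ for $v\le i$ and $v+m-1$ otherwise, and arcs $(a,b)$ of $\mathfrak D$ become $(a+i-1,b+i-1)$, keeping colours. The exception is the arc $(i,i+m)$, which is red if the $i$th edge of $\mathfrak C$ and the base of $\mathfrak D$ are both uncoloured, blue if both are blue, and uncoloured otherwise. For $x,y,z\in\{b,u\}$,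 $T_{xyz}$ denotes the BNC of size $2$ (a triangle with vertices $1,2,3$) whose first edge $(1,2)$ has colour $x$, whose base $(1,3)$ has colour $y$, and whose second edge $(2,3)$ has colour $z$, where $b$ = blue and $u$ = uncoloured. The suboperad generated by a set is the smallest suboperad containing it. *)

(* Defs.v *)
From mathcomp Require Import all_boot.
Set Implicit Arguments. Unset Strict Implicit. Unset Printing Implicit Defensive.

Inductive color := U | Bl | Rd.   (* uncoloured, blue, red *)

Definition color_eqb (x y : color) : bool :=
  match x, y with U, U | Bl, Bl | Rd, Rd => true | _, _ => false end.

(* A configuration of size n: vertices 1..n+1, and a colour for each arc
   (a,b) with 1 <= a < b <= n+1.  Colours outside this range are irrelevant;
   all configurations built below are normalised to U outside the range, so
   that Leibniz equality of configurations is equality of BNCs. *)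
Record config := Config { size_c : nat; col : nat -> nat -> color }.

Definition is_arc (n a b : nat) : bool := (1 <= a) && (a < b) && (b <= n.+1).

Definition crossing (a b c d : nat) : bool :=
  ((a < c) && (c < b) && (b < d)) || ((c < a) && (a < d) && (d < b)).

Definition is_diag (n a b : nat) : bool :=
  is_arc n a b && (b != a.+1) && ~~ ((a == 1) && (b == n.+1)).

Definition is_bnc (c : config) : Prop :=
  let n := size_c c in
  1 <= n /\
  (forall a b, ~~ is_arc n a b -> col c a b = U) /\
  (n = 1 -> col c 1 2 = Bl) /\
  (forall a b, is_arc n a b -> col c a b = Rd -> is_diag n a b) /\
  (forall a b a' b', is_arc n a b -> is_arc n a' b' ->
     col c a b <> U -> col c a' b' <> U -> ~~ crossing a b a' b').

(* colour of the new arc (i,i+m) from colour x of the i-th edge of C and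
   colour y of the base of D *)
Definition glue_color (x y : color) : color :=
  match x, y with U, U => Rd | Bl, Bl => Bl | _, _ => U end.

(* Partial composition C o_i D (glue the base of D on the i-th edge of C). *)
Definition bcomp (C : config) (i : nat) (D : config) : config :=
  let n := size_c C in let m := size_c D in
  let inC v := (v <= i) || (i + m <= v) in
  let unsig v := if v <= i then v else v + 1 - m in
  Config (n + m - 1) (fun a b =>
    if ~~ is_arc (n + m - 1) a b then U
    else if (a == i) && (b == i + m) then glue_color (col C i i.+1) (col D 1 m.+1)
    else if (i <= a) && (b <= i + m) then col D (a + 1 - i) (b + 1 - i)
    else if inC a && inC b then col C (unsig a) (unsig b)
    else U).

Definition unit_c : config :=
  Config 1 (fun a b => if (a == 1) && (b == 2) then Bl else U).

(* T_xyz: first edge (1,2) colour x, base (1,3) colour y, second edge (2,3) colour z *)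
Definition T (x y z : color) : config :=
  Config 2 (fun a b =>
    if (a == 1) && (b == 2) then x
    else if (a == 1) && (b == 3) then y
    else if (a == 2) && (b == 3) then z else U).

Definition p_c : config := T Bl Bl U.
Definition r_c : config := T U Bl U.

Inductive in_O : config -> Prop :=
| inO_unit : in_O unit_c
| inO_p : in_O p_c
| inO_r : in_O r_c
| inO_comp C i D : in_O C -> in_O D -> 1 <= i <= size_c C -> in_O (bcomp C i D).

Inductive gen := Gp | Gr.

(* planar binary trees with internal nodes labelled by generators; Leaf is
   the unit; inputs are the leaves, numbered 1.. from left to right *)
Inductive tree := Leaf | Node of gen & tree & tree.

Fixpoint arity (t : tree) : nat :=
  match t with Leaf => 1 | Node _ l r => arity l + arity r end.

Fixpoint tcomp (t : tree) (i : nat) (s : tree) : tree :=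
  match t with
  | Leaf => if i == 1 then s else Leaf
  | Node g l r => if i <= arity l then Node g (tcomp l i s) r
                  else Node g l (tcomp r (i - arity l) s)
  end.

Definition gtree (g : gen) : tree := Node g Leaf Leaf.

Definition rel1_l := tcomp (gtree Gr) 1 (gtree Gr).
Definition rel1_r := tcomp (gtree Gr) 2 (gtree Gr).
Definition rel2_l := tcomp (gtree Gr) 1 (gtree Gp).
Definition rel2_r := tcomp (gtree Gp) 2 (gtree Gr).

Inductive cong : tree -> tree -> Prop :=
| cong_rel1 : cong rel1_l rel1_r
| cong_rel2 : cong rel2_l rel2_r
| cong_refl t : cong t t
| cong_sym t t' : cong t t' -> cong t' t
| cong_trans t t' t'' : cong t t' -> cong t' t'' -> cong t t''
| cong_compl t t' i s : cong t t' -> 1 <= i <= arity t ->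
    cong (tcomp t i s) (tcomp t' i s)
| cong_compr s i t t' : cong t t' -> 1 <= i <= arity s ->
    cong (tcomp s i t) (tcomp s i t').

Definition gen_c (g : gen) : config := match g with Gp => p_c | Gr => r_c end.

Fixpoint eval (t : tree) : config :=
  match t with
  | Leaf => unit_c
  | Node g l r => bcomp (bcomp (gen_c g) 2 (eval r)) 1 (eval l)
  end.

(* Main.v *)
Require Import Defs.
From mathcomp Require Import all_boot zify.
From Stdlib Require Import FunctionalExtensionality.

Definition gcol (g : gen) := match g with Gp => Bl | Gr => U end.

Fixpoint sem (t : tree) : nat -> nat -> color :=
  match t with
  | Leaf => fun a b => if (a == 1) && (b == 2) then Bl else U
  | Node g l r => fun a b =>
     if ~~ is_arc (arity l + arity r) a b then U
     else if (a == 1) && (b == (arity l + arity r).+1) then Bl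
     else if (a == 1) && (b == (arity l).+1) then gcol g
     else if (a == (arity l).+1) && (b == (arity l + arity r).+1) then U
     else if b <= (arity l).+1 then sem l a b
     else if (arity l).+1 <= a then sem r (a - arity l) (b - arity l)
     else U
  end.

Lemma arity_pos t : 0 < arity t.
Proof. elim: t => //= g l IHl r IHr; lia. Qed.

Lemma sem_out t a b : ~~ is_arc (arity t) a b -> sem t a b = U.
Proof.
case: t => [|g l r] /=; last by move=> ->.
rewrite /is_arc; case: ifP => //; lia.
Qed.

Lemma sem_base t x y : x = 1 -> y = (arity t).+1 -> sem t x y = Bl.
Proof.
move=> -> ->; case: t => [|g l r] //=.
have := arity_pos l; have := arity_pos r.
rewrite /is_arc; case: ifP; [lia|]; by rewrite !eqxx.
Qed.

Lemma arity_tcomp t i s : 1 <= i <= arity t -> arity (tcomp t i s) = arity t + arity s - 1.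
Proof.
elim: t i => [|g l IHl r IHr] i /=.
  move=> H; have Hi : i = 1 by lia.
  by rewrite Hi eqxx; lia.
move=> H; case: ifP => Hi /=.
  rewrite IHl; [have := arity_pos s; lia | lia].
rewrite IHr; [have := arity_pos s; have := arity_pos l; lia | lia].
Qed.


Ltac split_ifs := repeat match goal with |- context [if ?c then _ else _] => case: (boolP c) => ? end.
Lemma if_and (T:Type) (x y : bool) (A B : T) : (if x && y then A else B) = (if x then if y then A else B else B).
Proof. by case: x. Qed.
Lemma if_or (T:Type) (x y : bool) (A B : T) : (if x || y then A else B) = (if x then A else if y then A else B).
Proof. by case: x. Qed.
Lemma if_neg (T:Type) (x : bool) (A B : T) : (if ~~ x then A else B) = (if x then B else A).
Proof. by case: x. Qed.
Ltac ar := unfold is_arc in *; lia.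
Ltac norm := rewrite /is_arc ?if_neg ?if_and ?if_or ?if_neg.
Ltac sp := repeat (match goal with |- context [if ?c then _ else _] => case: (boolP c) => ?; try (exfalso; lia) end).
Ltac fin := first [ done | (exfalso; ar) | (apply: sem_out; ar) | (symmetry; apply: sem_out; ar)
  | (apply: sem_base; ar) | (symmetry; apply: sem_base; ar) | (f_equal; ar) | (do 2 f_equal; ar) ].

Lemma sem_tcomp t i s : 1 <= i <= arity t -> forall a b,
  sem (tcomp t i s) a b = col (bcomp (Config (arity t) (sem t)) i (Config (arity s) (sem s))) a b.
Proof.
elim: t i => [|g l IHl r IHr] i Hi a b.
  simpl in Hi; have Hi1 : i = 1 by lia.
  subst i => /=.
  rewrite (sem_base s 1 (arity s).+1) //.
  by split_ifs; fin.
have Hs := arity_pos s; have Hl := arity_pos l; have Hr := arity_pos r.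
simpl in Hi.
rewrite /=; case: ifP => Hik.
  rewrite /= arity_tcomp; last lia.
  rewrite (sem_base s 1 (arity s).+1) //.
  rewrite IHl; last lia.
  rewrite /= ?(sem_base s 1 (arity s).+1) //.
  move: (arity l) (arity r) (arity s) Hs Hl Hr Hik Hi => k m ms Hs Hl Hr Hik Hi.
  norm. sp.
  all: try by case: g.
  all: try fin.
rewrite /= arity_tcomp; last lia.
rewrite IHr; last lia.
rewrite /= ?(sem_base s 1 (arity s).+1) //.
move: (arity l) (arity r) (arity s) Hs Hl Hr Hik Hi => k m ms Hs Hl Hr Hik Hi.
norm. sp.
all: try by case: g.
all: fin.
Qed.


Lemma config_ext c d : size_c c = size_c d -> (forall a b, col c a b = col d a b) -> c = d.
Proof.
case: c => n f; case: d => n' f' /= -> H.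
by have -> : f = f' by apply: functional_extensionality => a; apply: functional_extensionality.
Qed.

Lemma bcomp_sem t i s : 1 <= i <= arity t ->
  bcomp (Config (arity t) (sem t)) i (Config (arity s) (sem s)) = Config (arity (tcomp t i s)) (sem (tcomp t i s)).
Proof.
move=> Hi; apply: config_ext => [|a b]; last by rewrite /= sem_tcomp.
by rewrite /= arity_tcomp.
Qed.

Lemma gen_sem g : gen_c g = Config 2 (sem (gtree g)).
Proof.
apply: config_ext => [|a b]; first by case: g.
case: g => /=; norm; sp; fin.
Qed.

Lemma eval_sem t : eval t = Config (arity t) (sem t).
Proof.
elim: t => [|g l IHl r IHr] //=.
rewrite IHl IHr gen_sem.
have := bcomp_sem (gtree g) 2 r; rewrite /= => ->; last by [].
have := bcomp_sem (Node g Leaf r) 1 l; rewrite /= => ->; last by have := arity_pos r; lia.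
by [].
Qed.

Lemma size_eval t : size_c (eval t) = arity t.
Proof. by rewrite eval_sem. Qed.

Lemma eval_tcomp t i s : 1 <= i <= arity t -> eval (tcomp t i s) = bcomp (eval t) i (eval s).
Proof. by move=> Hi; rewrite !eval_sem bcomp_sem. Qed.

Lemma part1 c : in_O c <-> exists t : tree, eval t = c.
Proof.
split.
  elim => [|||C i D _ [t <-] _ [s <-] Hi].
  - by exists Leaf.
  - by exists (gtree Gp); rewrite eval_sem -gen_sem.
  - by exists (gtree Gr); rewrite eval_sem -gen_sem.
  - by exists (tcomp t i s); rewrite eval_tcomp // -size_eval.
move=> [t <-]; elim: t => [|g l IHl r IHr] /=; first exact: inO_unit.
apply: inO_comp => //.
  apply: inO_comp => //; first by case: g; constructor.
  by case: g.
rewrite /= size_eval; have := arity_pos r; case: g => /=; lia.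
Qed.

Lemma cong_eval t t' : cong t t' -> eval t = eval t'.
Proof.
elim => //.
- rewrite !eval_sem; apply: config_ext => // a b /=; norm; sp; fin.
- rewrite !eval_sem; apply: config_ext => // a b /=; norm; sp; fin.
- by move=> ? ? ? _ -> _ ->.
- move=> t1 t2 i s _ E Hi.
  have Hi' : 1 <= i <= arity t2 by rewrite -size_eval -E size_eval.
  by rewrite !eval_tcomp // E.
- move=> s i t1 t2 _ E Hi.
  by rewrite !eval_tcomp // E.
Qed.


Fixpoint normal (t : tree) : bool :=
  match t with
  | Leaf => true
  | Node Gp l r => normal l && normal r
  | Node Gr Leaf r => normal r
  | Node Gr _ _ => false
  end.

Fixpoint mkr (A B : tree) : tree :=
  match A with
  | Leaf => Node Gr Leaf B
  | Node Gp A1 A2 => Node Gp A1 (mkr A2 B)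
  | Node Gr _ A2 => Node Gr Leaf (mkr A2 B)
  end.

Fixpoint nf (t : tree) : tree :=
  match t with
  | Leaf => Leaf
  | Node Gp l r => Node Gp (nf l) (nf r)
  | Node Gr l r => mkr (nf l) (nf r)
  end.

Lemma cong_nodel g t t' s : cong t t' -> cong (Node g t s) (Node g t' s).
Proof.
move=> H; have := @cong_compr (Node g Leaf s) 1 _ _ H; rewrite /=; apply.
have := arity_pos s; lia.
Qed.

Lemma cong_noder g s t t' : cong t t' -> cong (Node g s t) (Node g s t').
Proof.
move=> H; have := @cong_compr (Node g s Leaf) (arity s).+1 _ _ H.
rewrite /= ltnn subSnn /=; apply; lia.
Qed.

Lemma cong_node g t t' s s' : cong t t' -> cong s s' -> cong (Node g t s) (Node g t' s').
Proof.
move=> H1 H2; apply: (cong_trans (cong_nodel g t t' s H1)); exact: cong_noder.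
Qed.

Lemma cong_assoc x y z : cong (Node Gr (Node Gr x y) z) (Node Gr x (Node Gr y z)).
Proof.
have H3 := @cong_compl _ _ 3 z cong_rel1 isT.
have H2 := @cong_compl _ _ 2 y H3 ltac:(rewrite /=; have := arity_pos z; lia).
have H1 := @cong_compl _ _ 1 x H2 ltac:(rewrite /=; have := arity_pos z; have := arity_pos y; lia).
exact: H1.
Qed.

Lemma cong_pr x y z : cong (Node Gr (Node Gp x y) z) (Node Gp x (Node Gr y z)).
Proof.
have H3 := @cong_compl _ _ 3 z cong_rel2 isT.
have H2 := @cong_compl _ _ 2 y H3 ltac:(rewrite /=; have := arity_pos z; lia).
have H1 := @cong_compl _ _ 1 x H2 ltac:(rewrite /=; have := arity_pos z; have := arity_pos y; lia).
exact: H1.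
Qed.

Lemma mkr_ok A B : normal A -> normal B -> cong (Node Gr A B) (mkr A B) /\ normal (mkr A B).
Proof.
elim: A => [|g A1 _ A2 IH2] /=; first by move=> _ ->; split=> //; exact: cong_refl.
case: g.
  move=> /andP[n1 n2] nB; have [c n] := IH2 n2 nB; split; last by rewrite /= n1.
  apply: (cong_trans (cong_pr _ _ _)); exact: cong_noder.
case: A1 => // n2 nB; have [c n] := IH2 n2 nB; split => //.
apply: (cong_trans (cong_assoc _ _ _)); exact: cong_noder.
Qed.

Lemma nf_ok t : cong t (nf t) /\ normal (nf t).
Proof.
elim: t => [|g l [cl nl] r [cr nr]] /=; first by split => //; exact: cong_refl.
case: g.
  by split; [exact: (@cong_node Gp _ _ _ _ cl cr) | rewrite /= nl nr].
have [c n] := mkr_ok (nf l) (nf r) nl nr; split => //.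
exact: (cong_trans (@cong_node Gr _ _ _ _ cl cr) c).
Qed.


Lemma sem_nodeL g l r a b : is_arc (arity l) a b -> ~~ ((a == 1) && (b == (arity l).+1)) ->
  sem (Node g l r) a b = sem l a b.
Proof.
move=> H1 H2; have Hp := arity_pos r; rewrite /is_arc in H1; rewrite /=; norm; sp; fin.
Qed.

Lemma sem_nodeR g l r a b : is_arc (arity r) a b -> ~~ ((a == 1) && (b == (arity r).+1)) ->
  sem (Node g l r) (a + arity l) (b + arity l) = sem r a b.
Proof.
move=> H1 H2; have Hp := arity_pos l; rewrite /is_arc in H1; rewrite /=; norm; sp; fin.
Qed.

Lemma sem_node1 g l r j : (arity l).+1 < j <= arity l + arity r -> sem (Node g l r) 1 j = U.
Proof. move=> H; have Hp := arity_pos l; rewrite /=; norm; sp; fin. Qed.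

Lemma sem_nodek g l r : sem (Node g l r) 1 (arity l).+1 = gcol g.
Proof. have := arity_pos r; have := arity_pos l; rewrite /=; norm; sp; fin. Qed.

Lemma normal_node g l r : normal (Node g l r) -> normal l /\ normal r /\ (g = Gr -> l = Leaf).
Proof. case: g => /=; first by move=> /andP[A B]. by case: l. Qed.

Lemma nf_inj t1 : forall t2, normal t1 -> normal t2 -> arity t1 = arity t2 ->
  (forall a b, sem t1 a b = sem t2 a b) -> t1 = t2.
Proof.
elim: t1 => [|g l IHl r IHr] [|g' l' r'] //.
- move=> _ _ /=; have := arity_pos l'; have := arity_pos r'; lia.
- move=> _ _ /=; have := arity_pos l; have := arity_pos r; lia.
move=> N1 N2 Ha Hs.
have Hl := arity_pos l; have Hr := arity_pos r; have Hl' := arity_pos l'; have Hr' := arity_pos r'.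
have nl := normal_node g l r N1.
have nl' := normal_node g' l' r' N2.
rewrite /= in Ha.
case: nl => nl [nr gl]; case: nl' => nl' [nr' gl'].
have [Ek Eg] : arity l = arity l' /\ g = g'.
  have S1 := sem_nodek g l r; have S2 := sem_nodek g' l' r'.
  have T1 := sem_node1 g l r; have T2 := sem_node1 g' l' r'.
  move: Hs; case: g gl S1 T1 {N1} => gl S1 T1; case: g' gl' S2 T2 {N2} => gl' S2 T2 Hs.
  - split=> //; case: (ltngtP (arity l) (arity l')) => // H.
      by have := T1 (arity l').+1 ltac:(lia); rewrite Hs S2; case.
    by have := T2 (arity l).+1 ltac:(lia); rewrite -Hs S1; case.
  - exfalso; have El' := gl' erefl; subst l'.
    have S2' : sem (Node Gr Leaf r') 1 2 = U := S2.
    rewrite /= in Ha.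
    case: (arity l =P 1) => H.
      by move: S1; rewrite H Hs S2'.
    by have := T2 (arity l).+1 ltac:(rewrite /=; lia); rewrite -Hs S1; case.
  - exfalso; have El := gl erefl; subst l.
    have S1' : sem (Node Gr Leaf r) 1 2 = U := S1.
    rewrite /= in Ha.
    case: (arity l' =P 1) => H.
      by move: S2; rewrite H -Hs S1'.
    by have := T1 (arity l').+1 ltac:(rewrite /=; lia); rewrite Hs S2; case.
  - by rewrite (gl erefl) (gl' erefl).
subst g'.
have Em : arity r = arity r' by lia.
have El : l = l'.
  apply: IHl => // a b.
  case A: (is_arc (arity l) a b); last by rewrite !sem_out ?A // -?Ek ?A.
  case B: ((a == 1) && (b == (arity l).+1)).
    by move/andP: B => [/eqP -> /eqP ->]; rewrite !sem_base // Ek.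
  by rewrite -(sem_nodeL g l r) ?B // Hs sem_nodeL -?Ek ?A ?B.
have Er : r = r'.
  apply: IHr => // a b.
  case A: (is_arc (arity r) a b); last by rewrite !sem_out ?A // -?Em ?A.
  case B: ((a == 1) && (b == (arity r).+1)).
    by move/andP: B => [/eqP -> /eqP ->]; rewrite !sem_base // Em.
  by rewrite -(sem_nodeR g l r) ?B // Hs Ek sem_nodeR -?Em ?A ?B.
by rewrite El Er.
Qed.


Theorem theorem3p24 :
  (forall c : config, in_O c <-> exists t : tree, eval t = c) /\
  (forall t1 t2 : tree, arity t1 = arity t2 ->
     (eval t1 = eval t2 <-> cong t1 t2)).
Proof.
split; first exact: part1.
move=> t1 t2 _; split; last exact: cong_eval.
move=> E.
have [c1 n1] := nf_ok t1; have [c2 n2] := nf_ok t2.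
have E' : eval (nf t1) = eval (nf t2).
  by rewrite -(cong_eval _ _ c1) -(cong_eval _ _ c2).
rewrite !eval_sem in E'; case: E' => Ea Es.
have Enf : nf t1 = nf t2.
  by apply: nf_inj => // a b; rewrite Es.
apply: (cong_trans c1); rewrite Enf; exact: cong_sym.
Qed.
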